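(* Let $\mathcal H=(V,E)$ be a hypergraph with splitting functions and let $R\subseteq V$ satisfy $0<\mathrm{vol}(R)\le\mathrm{vol}(\bar R)$. Let $\varepsilon_0=\mathrm{vol}(R)/\mathrm{vol}(\bar R)$, let $\varepsilon\in[\varepsilon_0,\varepsilon_0+1)$, and set $\mu=\varepsilon-\varepsilon_0\ge0$. Let $S^*$ be a minimizer of $\mathrm{HLC}$ over all subsets of $V$; this is the set returned by Algorithm 1. Then: 1. For every $T\subseteq R$ with $\mathrm{vol}(T)>0$, we have $\mathrm{cond}(S^* )\le\mathrm{cond}(T)$. 2. Let $T\subseteq V$ satisfy $0<\mathrm{vol}(T)\le\mathrm{vol}(\bar T)$, and suppose that for some $\gamma\in(\mu,1)$, $$\frac{\mathrm{vol}(T\cap R)}{\mathrm{vol}(T)}\ge\frac{\mathrm{vol}(R)}{\mathrm{vol}(V)}+\gamma\,\frac{\mathrm{vol}(\bar R)}{\mathrm{vol}(V)}.$$ Then $\mathrm{cond}(S^* )\le\frac{1}{\gamma-\mu}\mathrm{cond}(T)$. In particular, when $\varepsilon=\varepsilon_0$ we get $\mathrm{cond}(S^* )\le\frac1\gamma\mathrm{cond}(T)$.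
   Context: A hypergraph $\mathcal H=(V,E)$ has a finite node set $V$, and each hyperedge $e\in E$ is a subset of $V$. Each hyperedge $e$ carries a splitting function $w_e:2^e\to\mathbb R_{\ge0}$ satisfying $w_e(A)=w_e(e\setminus A)$ for all $A\subseteq e$ and $w_e(\emptyset)=w_e(e)=0$. For $S\subseteq V$, $\mathrm{cut}_{\mathcal H}(S)=\sum_{e\in E}w_e(e\cap S)$. The degree of $v$ is $d_v=\sum_{e\ni v}w_e(\{v\})$, and $\mathrm{vol}(S)=\sum_{v\in S}d_v$. Write $\bar S=V\setminus S$. Hypergraph conductance is $\mathrm{cond}(S)=\mathrm{cut}_{\mathcal H}(S)/\min\{\mathrm{vol}(S),\mathrm{vol}(\bar S)\}$. Define $\Omega_{R,\varepsilon}(S)=\mathrm{vol}(S\cap R)-\varepsilon\,\mathrm{vol}(S\cap\bar R)$. Set $\mathrm{HLC}(S)=\mathrm{cut}_{\mathcal H}(S)/\Omega_{R,\varepsilon}(S)$ if $\Omega_{R,\varepsilon}(S)>0$, and $\mathrm{HLC}(S)=\infty$ otherwise. *)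

(* Defs.v *)
From HB Require Import structures.
From mathcomp Require Import all_boot all_order all_algebra.
Set Implicit Arguments. Unset Strict Implicit. Unset Printing Implicit Defensive.
Import Order.TTheory GRing.Theory Num.Theory.
Local Open Scope ring_scope.

Definition is_splitting (R : realFieldType) (V E : finType)
  (edge : E -> {set V}) (w : E -> {set V} -> R) : Prop :=
  forall i : E,
    (forall A : {set V}, A \subset edge i -> 0 <= w i A) /\
    (forall A : {set V}, A \subset edge i -> w i A = w i (edge i :\: A)) /\
    w i set0 = 0 /\ w i (edge i) = 0.

Section HG.
Variables (R : realFieldType) (V E : finType)
  (edge : E -> {set V}) (w : E -> {set V} -> R).

Definition hcut (S : {set V}) : R := \sum_(i : E) w i (edge i :&: S).

Definition hdeg (v : V) : R := \sum_(i : E | v \in edge i) w i [set v].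

Definition hvol (S : {set V}) : R := \sum_(v in S) hdeg v.

(* conductance; (division by 0 is 0 in MathComp, never relevant below) *)
Definition hcond (S : {set V}) : R :=
  hcut S / Num.min (hvol S) (hvol (~: S)).

Definition Omega (Rs : {set V}) (eps : R) (S : {set V}) : R :=
  hvol (S :&: Rs) - eps * hvol (S :&: ~: Rs).

(* HLC with values in R ∪ {∞}; None encodes ∞. *)
Definition HLC (Rs : {set V}) (eps : R) (S : {set V}) : option R :=
  if 0 < Omega Rs eps S then Some (hcut S / Omega Rs eps S) else None.

End HG.

Definition ext_le (R : realFieldType) (x y : option R) : bool :=
  match x, y with
  | _, None => true
  | None, Some _ => false
  | Some a, Some b => a <= b
  end.

(* Main.v *)
Require Import Defs.
From HB Require Import structures.
From mathcomp Require Import all_boot all_order all_algebra.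
From mathcomp Require Import ring lra.
Import Order.TTheory GRing.Theory Num.Theory.
Local Open Scope ring_scope.

Section Aux.
Variables (R : realFieldType) (V E : finType)
  (edge : E -> {set V}) (w : E -> {set V} -> R)
  (Hw : is_splitting edge w).

Lemma hdeg_ge0 v : 0 <= hdeg edge w v.
Proof.
apply: sumr_ge0 => i vi; have [H _] := Hw i; apply: H; by rewrite sub1set.
Qed.

Lemma hvol_ge0 S : 0 <= hvol edge w S.
Proof. apply: sumr_ge0 => v _; exact: hdeg_ge0. Qed.

Lemma hcut_ge0 S : 0 <= hcut edge w S.
Proof. apply: sumr_ge0 => i _; have [H _] := Hw i; apply: H; exact: subsetIl. Qed.

Lemma hvol_split S A : hvol edge w S = hvol edge w (S :&: A) + hvol edge w (S :&: ~: A).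
Proof. by rewrite /hvol (big_setID A) /= setDE. Qed.

Lemma omega_le Rs eps S :
  0 < hvol edge w (~: Rs) ->
  hvol edge w Rs <= hvol edge w (~: Rs) ->
  hvol edge w Rs / hvol edge w (~: Rs) <= eps ->
  Omega edge w Rs eps S <= Num.min (hvol edge w S) (hvol edge w (~: S)).
Proof.
move=> Hb Hle He.
rewrite /Omega le_min.
have e0r : hvol edge w Rs / hvol edge w (~: Rs) * hvol edge w (~: Rs) = hvol edge w Rs.
  by rewrite mulfVK // gt_eqF.
have e01 : hvol edge w Rs / hvol edge w (~: Rs) <= 1 by rewrite ler_pdivrMr // mul1r.
set e0 := hvol edge w Rs / hvol edge w (~: Rs) in e0r e01 He.
have sR := hvol_split Rs S. have sRc := hvol_split (~: Rs) S.
have sS := hvol_split S Rs. have sSc := hvol_split (~: S) Rs.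
rewrite [Rs :&: S]setIC [Rs :&: ~: S]setIC [~: Rs :&: S]setIC [~: Rs :&: ~: S]setIC in sR sRc.
have ha := hvol_ge0 (S :&: Rs). have hb := hvol_ge0 (S :&: ~: Rs).
have hc := hvol_ge0 (~: S :&: Rs). have hd := hvol_ge0 (~: S :&: ~: Rs).
have h1 : e0 * hvol edge w (S :&: ~: Rs) <= eps * hvol edge w (S :&: ~: Rs).
  by apply: ler_wpM2r.
have h2 : e0 * hvol edge w (~: S :&: ~: Rs) <= hvol edge w (~: S :&: ~: Rs).
  by rewrite -{2}[hvol edge w (~: S :&: ~: Rs)]mul1r; apply: ler_wpM2r.
have he0 : 0 <= e0 by rewrite divr_ge0 // hvol_ge0.
have h3 : 0 <= eps * hvol edge w (S :&: ~: Rs) by apply: mulr_ge0 => //; apply: le_trans He.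
rewrite sRc mulrDr in e0r.
apply/andP; split; rewrite ?sS ?sSc; lra.
Qed.

Lemma div_le (c k t O : R) : 0 <= c -> 0 < k -> 0 < t -> k * t <= O ->
  c / O <= k^-1 * (c / t).
Proof.
move=> c0 k0 t0 kt.
have -> : k^-1 * (c / t) = c / (k * t) by rewrite invfM; field; rewrite ?gt_eqF.
apply: ler_wpM2l => //.
have kt0 : 0 < k * t by exact: mulr_gt0.
have O0 : 0 < O by exact: lt_le_trans kt.
by rewrite lef_pV2 ?posrE.
Qed.

End Aux.
Arguments hdeg_ge0 {R V E edge w}.
Arguments hvol_ge0 {R V E edge w}.
Arguments hcut_ge0 {R V E edge w}.
Arguments hvol_split {R V E edge w}.
Arguments omega_le {R V E edge w}.
Arguments div_le {R}.

Theorem theorem4 (R : realFieldType) (V E : finType)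
  (edge : E -> {set V}) (w : E -> {set V} -> R)
  (Hw : is_splitting edge w)
  (Rs : {set V})
  (HR0 : 0 < hvol edge w Rs)
  (HRle : hvol edge w Rs <= hvol edge w (~: Rs))
  (eps : R)
  (Heps0 : hvol edge w Rs / hvol edge w (~: Rs) <= eps)
  (Heps1 : eps < hvol edge w Rs / hvol edge w (~: Rs) + 1)
  (Sstar : {set V})
  (Hmin : forall S : {set V},
      ext_le (HLC edge w Rs eps Sstar) (HLC edge w Rs eps S)) :
  let eps0 := hvol edge w Rs / hvol edge w (~: Rs) in
  let mu := eps - eps0 in
  (forall T : {set V}, T \subset Rs -> 0 < hvol edge w T ->
      hcond edge w Sstar <= hcond edge w T) /\
  (forall (T : {set V}) (gamma : R),
      0 < hvol edge w T -> hvol edge w T <= hvol edge w (~: T) ->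
      mu < gamma -> gamma < 1 ->
      hvol edge w (T :&: Rs) / hvol edge w T >=
        hvol edge w Rs / hvol edge w [set: V]
        + gamma * (hvol edge w (~: Rs) / hvol edge w [set: V]) ->
      hcond edge w Sstar <= (gamma - mu)^-1 * hcond edge w T /\
      (eps = eps0 -> hcond edge w Sstar <= gamma^-1 * hcond edge w T)).
Proof.
move=> eps0 mu.
have Hb : 0 < hvol edge w (~: Rs) by apply: lt_le_trans HRle.
have Hstar : forall T, 0 < Omega edge w Rs eps T ->
   hcond edge w Sstar <= hcut edge w T / Omega edge w Rs eps T.
  move=> T HT; have := Hmin T; rewrite /HLC HT.
  case: ifP => // HS /= Hle; apply: le_trans Hle.
  apply: ler_wpM2l; first exact: hcut_ge0.
  have Hm := omega_le Hw Rs eps Sstar Hb HRle Heps0.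
  rewrite lef_pV2 ?posrE //; exact: lt_le_trans Hm.
split.
  move=> T TR Tpos.
  have OT : Omega edge w Rs eps T = hvol edge w T.
    rewrite /Omega (setIidPl TR).
    have -> : T :&: ~: Rs = set0.
      by apply/setP => x; rewrite !inE; case: (boolP (x \in T)) => //= /(subsetP TR) ->.
    by rewrite /hvol big_set0 mulr0 subr0.
  have TT : hvol edge w T <= hvol edge w (~: T).
    apply: (le_trans _ (le_trans HRle _)).
      by rewrite (hvol_split Rs T) (setIidPr TR) lerDl hvol_ge0.
    rewrite (hvol_split (~: T) Rs).
    have -> : ~: T :&: Rs = Rs :\: T by rewrite setDE setIC.
    have -> : ~: T :&: ~: Rs = ~: Rs.
      apply/setIidPr; rewrite setCS //.
    by rewrite lerDr hvol_ge0.
  rewrite {2}/hcond min_l // -OT; apply: Hstar; by rewrite OT.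
move=> T g Tpos TT mug g1 Hg.
set a := hvol edge w (T :&: Rs) in Hg *.
set b := hvol edge w (T :&: ~: Rs).
set r := hvol edge w Rs in Hb HR0 HRle Heps0 Heps1 eps0 mu mug Hg *.
set rb := hvol edge w (~: Rs) in Hb HRle Heps0 Heps1 eps0 mu mug Hg *.
have tV : hvol edge w [set: V] = r + rb by rewrite (hvol_split [set: V] Rs) !setTI.
rewrite tV in Hg.
have tS : hvol edge w T = a + b by rewrite (hvol_split T Rs).
have hVpos : 0 < r + rb by lra.
have Hg' : (r + g * rb) / (r + rb) * hvol edge w T <= a.
  rewrite -ler_pdivlMr //; apply: le_trans Hg; rewrite le_eqVlt; apply/orP; left.
  by apply/eqP; field; rewrite gt_eqF.
have hE : (1 + eps0) * ((r + g * rb) / (r + rb)) = eps0 + g.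
  rewrite /eps0; field; (try apply/andP; split); rewrite gt_eqF //.
set X := (r + g * rb) / (r + rb) in Hg' hE.
have He0 : eps0 <= eps := Heps0.
have e00 : 0 <= eps0 by rewrite divr_ge0 // ltW.
have mu0 : 0 <= mu by rewrite /mu subr_ge0.
have X0 : 0 <= X by rewrite divr_ge0 //; [ nra | lra].
have h1 : 0 <= (1 + eps) * (a - X * hvol edge w T) by apply: mulr_ge0; lra.
have h2 : 0 <= (eps - eps0) * X * hvol edge w T by apply: mulr_ge0; [apply: mulr_ge0|]; lra.
have KEY : (g - mu) * hvol edge w T <= Omega edge w Rs eps T.
  rewrite /Omega -/a -/b; rewrite tS in h1 h2 *; rewrite /mu; nra.
have OTp : 0 < Omega edge w Rs eps T by apply: lt_le_trans KEY; apply: mulr_gt0 => //; lra.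
have main : forall k, 0 < k -> k * hvol edge w T <= Omega edge w Rs eps T ->
   hcond edge w Sstar <= k^-1 * hcond edge w T.
  move=> k k0 kT; apply: le_trans (Hstar _ OTp) _.
  rewrite /hcond min_l //; apply: div_le => //; exact: hcut_ge0.
split; first by apply: main => //; lra.
move=> ee; apply: main; first lra.
by move: KEY; rewrite /mu ee subrr subr0.
Qed.
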